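(* Let the timeline be $(\mathbb{Z},\leq)$, let $\Pi$ be a propositional DatalogMTL program, $\mathcal{D}$ a dataset in normal form, $Q$ a proposition and $t_B\le t_E$ integers. Let $B,E,Q'$ be fresh propositions and $\Pi^Q=\Pi\cup\{Q'\leftarrow Q\,\mathcal{U}_{[0,\infty)}\,E,\ \bot\leftarrow B\wedge Q'\}$. Then $Q@[t_B,t_E]$ is entailed from $(\mathcal{D},\Pi)$ under the $s$-brave semantics if and only if there exists a subset $\mathcal{D}'\subseteq\mathcal{D}$ such that $\mathcal{D}'$ is $\Pi$-consistent and $\mathcal{D}'\cup\{B@\{t_B-1\},E@\{t_E+1\}\}$ is $\Pi^Q$-inconsistent.
   Context: A propositional DatalogMTL program uses only nullary predicates. $\mathfrak{M},t\models A\,\mathcal{U}_\varrho A'$ iff there is $t'$ with $t'-t\in\varrho$, $\mathfrak{M},t'\models A'$, and $A$ holds at all $s\in(t,t')$. A dataset is a finite set of facts $P@\iota$ ($\iota$ a non-empty interval); $\Pi$-consistency and entailment are as usual. A set of facts is in normal form if it contains no two distinct facts $P@\iota_1,P@\iota_2$ with $\iota_1\cup\iota_2$ (as a set of integers) equal to the set of integers of an interval. An $s$-repair of $\mathcal{D}$ w.r.t. $\Pi$ is a $\subseteq$-maximal $\Pi$-consistent subset of $\mathcal{D}$. $Q@[t_B,t_E]$ is entailed under $s$-brave semantics if $(\mathcal{R},\Pi)\models Q@[t_B,t_E]$ for some $s$-repair $\mathcal{R}$. *)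

(* Defs.v *)
From Stdlib Require Import ZArith List.
Import ListNotations.
Open Scope Z_scope.

Section DatalogMTL.
Variable Pr : Type.

(* Metric intervals ϱ of operators: nonnegative, integer endpoints,
   upper end possibly +infinity (None).  Over Z every such interval (open or
   closed ends) denotes the same integer set as a closed one. *)
Record mint := MI { mlo : nat ; mhi : option nat }.
Definition in_mint (r : mint) (d : Z) : Prop :=
  Z.of_nat (mlo r) <= d /\
  match mhi r with None => True | Some h => d <= Z.of_nat h end.

Inductive batom :=
| BTop | BBot | BProp (p : Pr)
| BBoxMinus (r : mint) (a : batom) | BBoxPlus (r : mint) (a : batom)
| BDiaMinus (r : mint) (a : batom) | BDiaPlus (r : mint) (a : batom)
| BSince (r : mint) (a1 a2 : batom) | BUntil (r : mint) (a1 a2 : batom).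

Inductive hatom :=
| HProp (p : Pr) | HBoxMinus (r : mint) (h : hatom) | HBoxPlus (r : mint) (h : hatom).

(* A rule: head (None = ⊥) and body conjunction *)
Record rule := Rule { rhead : option hatom ; rbody : list batom }.
Definition program := list rule.

Definition interp := Pr -> Z -> Prop.

Fixpoint holds (M : interp) (a : batom) (t : Z) : Prop :=
  match a with
  | BTop => True
  | BBot => False
  | BProp p => M p t
  | BBoxMinus r a => forall s, in_mint r (t - s) -> holds M a s
  | BBoxPlus r a => forall s, in_mint r (s - t) -> holds M a s
  | BDiaMinus r a => exists s, in_mint r (t - s) /\ holds M a s
  | BDiaPlus r a => exists s, in_mint r (s - t) /\ holds M a s
  | BSince r a1 a2 => exists t', in_mint r (t - t') /\ holds M a2 t' /\
                        forall s, t' < s < t -> holds M a1 s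
  | BUntil r a1 a2 => exists t', in_mint r (t' - t) /\ holds M a2 t' /\
                        forall s, t < s < t' -> holds M a1 s
  end.

Fixpoint hholds (M : interp) (h : hatom) (t : Z) : Prop :=
  match h with
  | HProp p => M p t
  | HBoxMinus r h => forall s, in_mint r (t - s) -> hholds M h s
  | HBoxPlus r h => forall s, in_mint r (s - t) -> hholds M h s
  end.

Definition rule_sat (M : interp) (ru : rule) : Prop :=
  forall t, (forall a, In a (rbody ru) -> holds M a t) ->
    match rhead ru with Some h => hholds M h t | None => False end.

Definition model_prog (M : interp) (P : program) : Prop :=
  forall ru, In ru P -> rule_sat M ru.

(* Dataset intervals: integer endpoints, None = infinite end *)
Record dint := DI { dlo : option Z ; dhi : option Z }.
Definition in_dint (i : dint) (t : Z) : Prop :=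
  match dlo i with None => True | Some l => l <= t end /\
  match dhi i with None => True | Some h => t <= h end.
Definition point (t : Z) : dint := DI (Some t) (Some t).

Record fact := MkFact { fpred : Pr ; fint : dint }.
Definition dataset := list fact.

Definition wf_dataset (D : dataset) : Prop :=
  forall f, In f D -> exists t, in_dint (fint f) t.

Definition model_data (M : interp) (D : dataset) : Prop :=
  forall f, In f D -> forall t, in_dint (fint f) t -> M (fpred f) t.

Definition consistent (P : program) (D : dataset) : Prop :=
  exists M, model_prog M P /\ model_data M D.

Definition entails (P : program) (D : dataset) (Q : Pr) (tB tE : Z) : Prop :=
  forall M, model_prog M P -> model_data M D ->
    forall t, tB <= t <= tE -> M Q t.

Definition normal_form (D : dataset) : Prop :=
  forall f1 f2, In f1 D -> In f2 D -> f1 <> f2 -> fpred f1 = fpred f2 ->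
    ~ exists i : dint, forall t, (in_dint (fint f1) t \/ in_dint (fint f2) t) <-> in_dint i t.

Definition s_repair (P : program) (D R : dataset) : Prop :=
  incl R D /\ consistent P R /\
  forall R', incl R R' -> incl R' D -> consistent P R' -> incl R' R.

Definition s_brave_entails (P : program) (D : dataset) (Q : Pr) (tB tE : Z) : Prop :=
  exists R, s_repair P D R /\ entails P R Q tB tE.

Fixpoint occ_batom (p : Pr) (a : batom) : Prop :=
  match a with
  | BTop | BBot => False
  | BProp q => q = p
  | BBoxMinus _ a | BBoxPlus _ a | BDiaMinus _ a | BDiaPlus _ a => occ_batom p a
  | BSince _ a1 a2 | BUntil _ a1 a2 => occ_batom p a1 \/ occ_batom p a2
  end.
Fixpoint occ_hatom (p : Pr) (h : hatom) : Prop :=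
  match h with
  | HProp q => q = p
  | HBoxMinus _ h | HBoxPlus _ h => occ_hatom p h
  end.
Definition occ_program (p : Pr) (P : program) : Prop :=
  exists ru, In ru P /\
    ((exists h, rhead ru = Some h /\ occ_hatom p h) \/
     (exists a, In a (rbody ru) /\ occ_batom p a)).
Definition occ_dataset (p : Pr) (D : dataset) : Prop :=
  exists f, In f D /\ fpred f = p.

Definition piQ (P : program) (Q B E Q' : Pr) : program :=
  P ++ [Rule (Some (HProp Q')) [BUntil (MI 0 None) (BProp Q) (BProp E)];
        Rule None [BProp B; BProp Q']].

End DatalogMTL.

Arguments wf_dataset {Pr} D.
Arguments normal_form {Pr} D.
Arguments consistent {Pr} P D.
Arguments s_brave_entails {Pr} P D Q tB tE.
Arguments occ_program {Pr} p P.
Arguments occ_dataset {Pr} p D.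
Arguments piQ {Pr} P Q B E Q'.
Arguments MkFact {Pr} fpred fint.

(* Main.v *)
Require Import Defs.
From Stdlib Require Import ZArith List Lia Classical.
Import ListNotations.
Open Scope Z_scope.

Section Aux.
Variable Pr : Type.

Lemma cons_mono (P : program Pr) (X Y : dataset Pr) :
  incl X Y -> consistent P Y -> consistent P X.
Proof.
  intros H [M [H1 H2]]. exists M. split; auto. intros f Hf. apply H2. auto.
Qed.

Lemma ext_lemma (P : program Pr) (D : dataset Pr) : forall L R0,
  incl R0 D -> consistent P R0 ->
  exists R, incl R0 R /\ incl R D /\ consistent P R /\
   forall f, In f L -> forall R', incl R R' -> incl R' D -> consistent P R' -> In f R' -> In f R.
Proof.
  induction L as [|f L IH]; intros R0 H0 C0.
  - exists R0. repeat split; auto using incl_refl. intros f [].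
  - destruct (classic (In f D /\ consistent P (f :: R0))) as [[Hd Hc]|Hn].
    + destruct (IH (f :: R0)) as [R [A [B [C Dd]]]].
      { intros g [ <- |Hg]; auto. } exact Hc.
      exists R. repeat split; auto.
      { intros g Hg. apply A. right; auto. }
      intros g [ <- |Hg]; eauto. intros. apply A. left; auto.
    + destruct (IH R0) as [R [A [B [C Dd]]]]; auto.
      exists R. repeat split; auto.
      intros g [ <- |Hg]; eauto.
      intros R' HR HR' CR Hin. exfalso. apply Hn. split; auto.
      apply (cons_mono P _ R'); auto.
      intros h [ <- |Hh]; auto.
Qed.

Lemma holds_agree (M M' : interp Pr) : forall a t,
  (forall p, occ_batom Pr p a -> forall s, M p s <-> M' p s) ->
  (holds Pr M a t <-> holds Pr M' a t).
Proof.
  induction a; intros t Hag; simpl in *; try tauto.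
  - apply Hag. reflexivity.
  - split; intros H s Hs; specialize (H s Hs); apply (IHa s); auto.
  - split; intros H s Hs; specialize (H s Hs); apply (IHa s); auto.
  - split; intros [s [Hs H]]; exists s; split; auto; apply (IHa s); auto.
  - split; intros [s [Hs H]]; exists s; split; auto; apply (IHa s); auto.
  - split; intros [s [Hs [H1 H2]]]; exists s; split; auto; split;
      [apply (IHa2 s); auto | intros u Hu; apply (IHa1 u); auto |
       apply (IHa2 s); auto | intros u Hu; apply (IHa1 u); auto].
  - split; intros [s [Hs [H1 H2]]]; exists s; split; auto; split;
      [apply (IHa2 s); auto | intros u Hu; apply (IHa1 u); auto |
       apply (IHa2 s); auto | intros u Hu; apply (IHa1 u); auto].
Qed.

Lemma hholds_agree (M M' : interp Pr) : forall h t,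
  (forall p, occ_hatom Pr p h -> forall s, M p s <-> M' p s) ->
  (hholds Pr M h t <-> hholds Pr M' h t).
Proof.
  induction h; intros t Hag; simpl in *.
  - apply Hag. reflexivity.
  - split; intros H s Hs; specialize (H s Hs); apply (IHh s); auto.
  - split; intros H s Hs; specialize (H s Hs); apply (IHh s); auto.
Qed.

End Aux.

Theorem mainTheorem5 (Pr : Type) (P : program Pr) (D : dataset Pr) (Q : Pr) (tB tE : Z)
  (B E Q' : Pr)
  (hwf : wf_dataset D) (hnf : normal_form D) (htt : tB <= tE)
  (hB : ~ occ_program B P /\ ~ occ_dataset B D)
  (hE : ~ occ_program E P /\ ~ occ_dataset E D)
  (hQ' : ~ occ_program Q' P /\ ~ occ_dataset Q' D)
  (hfresh : B <> Q /\ E <> Q /\ Q' <> Q /\ B <> E /\ B <> Q' /\ E <> Q') :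
  s_brave_entails P D Q tB tE <->
  exists D', incl D' D /\ consistent P D' /\
    ~ consistent (piQ P Q B E Q')
        (D' ++ [MkFact B (point (tB - 1)); MkFact E (point (tE + 1))]).
Proof.
  destruct hfresh as (f1 & f2 & f3 & f4 & f5 & f6).
  split.
  - intros [R [[HR1 [HR2 HR3]] Hent]].
    exists R. split; auto. split; auto.
    intros [M [Hm Hd]].
    assert (HmP : model_prog Pr M P).
    { intros ru Hru. apply Hm. unfold piQ. apply in_or_app. auto. }
    assert (HdR : model_data Pr M R).
    { intros f Hf. apply Hd. apply in_or_app. auto. }
    assert (HBt : M B (tB - 1)).
    { apply (Hd (MkFact B (point (tB - 1)))). apply in_or_app; right; simpl; auto.
      simpl. unfold in_dint; simpl; lia. }
    assert (HEt : M E (tE + 1)).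
    { apply (Hd (MkFact E (point (tE + 1)))). apply in_or_app; right; simpl; auto.
      simpl. unfold in_dint; simpl; lia. }
    assert (HQ't : M Q' (tB - 1)).
    { specialize (Hm _ (ltac:(unfold piQ; apply in_or_app; right; simpl; left; reflexivity))).
      apply (Hm (tB - 1)). simpl. intros a [ <- |[]]. simpl.
      exists (tE + 1). split. { unfold in_mint; simpl; lia. }
      split; auto. intros s Hs. apply (Hent M HmP HdR). lia. }
    specialize (Hm _ (ltac:(unfold piQ; apply in_or_app; right; simpl; right; left; reflexivity))).
    apply (Hm (tB - 1)). simpl. intros a [ <- |[ <- |[]]]; simpl; auto.
  - intros [D' [HD' [HC HN]]].
    destruct (ext_lemma Pr P D D D' HD' HC) as [R [A [Bi [C Dd]]]].
    exists R. split.
    { split; auto. split; auto. intros R' HR HR' CR g Hg. apply (Dd g (HR' g Hg) R'); auto. }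
    intros M HmP HdR t Ht. apply NNPP. intro HnQ. apply HN.
    set (M' := fun p s =>
      (p = B /\ s = tB - 1) \/ (p = E /\ s = tE + 1) \/
      (p = Q' /\ s <= tE + 1 /\ forall u, s < u < tE + 1 -> M Q u) \/
      (p <> B /\ p <> E /\ p <> Q' /\ M p s)).
    assert (Hag : forall p, p <> B -> p <> E -> p <> Q' -> forall s, M p s <-> M' p s).
    { intros p n1 n2 n3 s. unfold M'. split; [tauto|].
      intros [[? ?]|[[? ?]|[[? ?]|?]]]; subst; tauto. }
    assert (HQ : forall s, M' Q s <-> M Q s).
    { intro s. symmetry. apply Hag; auto. }
    exists M'. split.
    + intros ru Hru. unfold piQ in Hru. apply in_app_or in Hru.
      destruct Hru as [Hru|[ <- |[ <- |[]]]].
      * intros s Hb.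
        assert (Hocc : forall p, (p = B \/ p = E \/ p = Q') -> ~ ((exists h, rhead Pr ru = Some h /\ occ_hatom Pr p h) \/
             (exists a, In a (rbody Pr ru) /\ occ_batom Pr p a))).
        { intros p Hp Ho. destruct Hp as [ -> | [ -> | -> ] ];
          [apply (proj1 hB)|apply (proj1 hE)|apply (proj1 hQ')]; exists ru; auto. }
        assert (Hag2 : forall p, (exists h, rhead Pr ru = Some h /\ occ_hatom Pr p h) \/
             (exists a, In a (rbody Pr ru) /\ occ_batom Pr p a) -> forall s, M p s <-> M' p s).
        { intros p Hp. apply Hag; intro Heq; subst p; revert Hp; apply Hocc; tauto. }
        specialize (HmP ru Hru s).
        assert (Hb' : forall a, In a (rbody Pr ru) -> holds Pr M a s).
        { intros a Ha. apply (holds_agree Pr M M'); auto.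
          intros p Hp. apply Hag2. right. eauto. }
        specialize (HmP Hb').
        destruct (rhead Pr ru) as [h|] eqn:Eh; auto.
        apply (hholds_agree Pr M M'); auto.
        intros p Hp. apply Hag2. left. eauto.
      * intros s Hb. simpl in *. specialize (Hb _ (or_introl eq_refl)). simpl in Hb.
        destruct Hb as [t' [Hin [HE1 HE2]]].
        unfold M' in HE1.
        destruct HE1 as [[? ?]|[[_ ->]|[[? ?]|(? & ? & ? & ?)]]]; try congruence.
        right; right; left. unfold in_mint in Hin; simpl in Hin.
        split; auto. split; [lia|]. intros u Hu. apply HQ. apply HE2. auto.
      * intros s Hb. simpl in *.
        pose proof (Hb _ (or_introl eq_refl)) as H1.
        pose proof (Hb _ (or_intror (or_introl eq_refl))) as H2. simpl in H1, H2.
        unfold M' in H1, H2.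
        destruct H1 as [[_ ->]|[[? ?]|[[? ?]|(? & ? & ? & ?)]]]; try congruence.
        destruct H2 as [[? ?]|[[? ?]|[[_ [_ H]]|(? & ? & ? & ?)]]]; try congruence.
        apply HnQ. apply H. lia.
    + intros f Hf s Hs. apply in_app_or in Hf.
      destruct Hf as [Hf|[ <- |[ <- |[]]]].
      * assert (Hfd : In f D) by auto.
        assert (fpred Pr f <> B) by (intro; apply (proj2 hB); exists f; auto).
        assert (fpred Pr f <> E) by (intro; apply (proj2 hE); exists f; auto).
        assert (fpred Pr f <> Q') by (intro; apply (proj2 hQ'); exists f; auto).
        apply Hag; auto.
      * simpl in *. unfold in_dint in Hs; simpl in Hs. left. split; auto; lia.
      * simpl in *. unfold in_dint in Hs; simpl in Hs. right; left. split; auto; lia.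
Qed.
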